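(* The map $\Delta\mapsto G_n(\Delta)$ from the set of zero-normalized $\Gamma_{m,n}$-semimodules to $Y_{n,m}$ is bijective if and only if the map $\Delta\mapsto G_m(\Delta)$ from the set of zero-normalized $\Gamma_{m,n}$-semimodules to $Y_{m,n}$ is bijective.
   Context: Let $m,n$ be coprime positive integers and $\Gamma_{m,n}=\{am+bn:a,b\in\mathbb{Z}_{\ge0}\}$. A $\Gamma_{m,n}$-semimodule is $\Delta\subset\mathbb{Z}_{\ge0}$ with $\Delta+\Gamma_{m,n}\subset\Delta$; zero-normalized means $\min\Delta=0$. For $p\in\{m,n\}$, a $p$-generator of $\Delta$ is $a\in\Delta$ with $a-p\notin\Delta$; there are exactly $p$ of them. With $a_1<\dots<a_m$ the $m$-generators and $b_1<\dots<b_n$ the $n$-generators, put $g_m(x)=\#(([x,x+n)\cap\mathbb{Z})\setminus\Delta)$, $g_n(x)=\#(([x,x+m)\cap\mathbb{Z})\setminus\Delta)$. $G_m(\Delta)$ is the Young diagram with column heights $g_m(a_1)\ge\dots\ge g_m(a_m)$, and $G_n(\Delta)$ the one with column heights $g_n(b_1)\ge\dots\ge g_n(b_n)$. For coprime $p,q$, $Y_{p,q}$ is the set of Young diagrams (French convention) with column heights $h_1\ge\dots\ge h_p\ge0$ such that every box in column $i$, row $j$ ($1\le j\le h_i$) satisfies $i/p+j/q\le1$; one has $G_m(\Delta)\in Y_{m,n}$ and $G_n(\Delta)\in Y_{n,m}$. *)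

(* Defs.v *)
From mathcomp Require Import all_boot.
Set Implicit Arguments. Unset Strict Implicit. Unset Printing Implicit Defensive.

(* A subset Delta of Z_{>=0} is represented by its (boolean) membership predicate. *)

(* Delta + Gamma_{m,n} \subset Delta  (equivalently: closed under +m and +n). *)
Definition semimodule (m n : nat) (D : nat -> bool) : Prop :=
  forall x, D x -> D (x + m) /\ D (x + n).

(* zero-normalized: min Delta = 0, i.e. 0 \in Delta (Delta \subset Z_{>=0}). *)
Definition zn_semimodule (m n : nat) (D : nat -> bool) : Prop :=
  semimodule m n D /\ D 0.

(* a is a p-generator of D : a \in D and a - p \notin D (a - p < 0 counts as \notin D). *)
Definition is_gen (p : nat) (D : nat -> bool) (a : nat) : bool :=
  D a && ~~ ((p <= a) && D (a - p)).

(* All of them are < m*n (since Delta \supset Gamma_{m,n} contains every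
   integer >= (m-1)(n-1)), so searching in [0, m*n) lists all of them. *)
Definition gens (m n p : nat) (D : nat -> bool) : seq nat :=
  [seq a <- iota 0 (m * n) | is_gen p D a].

Definition gap_count (D : nat -> bool) (len x : nat) : nat :=
  count (fun y => ~~ D y) (iota x len).

(* Young diagrams are given by their list of column heights. *)
Definition G_m (m n : nat) (D : nat -> bool) : seq nat :=
  [seq gap_count D n a | a <- gens m n m D].

Definition G_n (m n : nat) (D : nat -> bool) : seq nat :=
  [seq gap_count D m b | b <- gens m n n D].

(* Y_{p,q}: column heights h_1 >= ... >= h_p >= 0 such that every box
   (column i, row j, 1 <= j <= h_i) satisfies i/p + j/q <= 1, i.e. i*q + j*p <= p*q.
   Columns are 0-indexed here: column i+1 of the paper is index i. *)
Definition in_Y (p q : nat) (h : seq nat) : Prop :=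
  [/\ size h = p, sorted geq h &
      forall i : 'I_p, forall j : nat,
        1 <= j <= nth 0 h i -> i.+1 * q + j * p <= p * q].

Definition bij_onto (m n : nat) (G : (nat -> bool) -> seq nat)
    (Y : seq nat -> Prop) : Prop :=
  [/\ (forall D, zn_semimodule m n D -> Y (G D)),
      (forall D1 D2, zn_semimodule m n D1 -> zn_semimodule m n D2 ->
          G D1 = G D2 -> D1 =1 D2) &
      (forall h, Y h -> exists D, zn_semimodule m n D /\ G D = h)].

(* Main.v *)
Require Import Defs.
From mathcomp Require Import all_boot zify.

Lemma zn_sym m n D : zn_semimodule m n D -> zn_semimodule n m D.
Proof. by case=> H H0; split=> // x /H []. Qed.

Lemma zn_addm m n D x k : zn_semimodule m n D -> D x -> D (x + k * m).
Proof.
rewrite /zn_semimodule /semimodule; case=> H _ Dx; elim: k => [|k IH]; first by rewrite mul0n addn0.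
by rewrite mulSn (addnC m) addnA; exact: (H _ IH).1.
Qed.

Lemma zn_addn m n D x k : zn_semimodule m n D -> D x -> D (x + k * n).
Proof. by move/zn_sym; apply: zn_addm. Qed.

Lemma big_in m n D : 0 < m -> 0 < n -> coprime m n -> zn_semimodule m n D ->
  forall x, (m - 1) * n <= x -> D x.
Proof.
move=> m0 n0 co zD x hx.
have co' : coprime n m by rewrite coprime_sym.
case/(coprimeP _ n0): co' => [[u1 u2]] /= Hu.
have Hu' : u1 * n = 1 + u2 * m by lia.
set k := (x * u1) %% m.
have km : k < m by rewrite ltn_mod.
have kn : k * n <= x.
  by apply: leq_trans hx; rewrite leq_mul2r; apply/orP; right; lia.
have Hk : x == k * n %[mod m].
  rewrite /k modnMml -mulnA Hu' mulnDr muln1 mulnA addnC modnMDl.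
  by [].
rewrite eqn_mod_dvd // in Hk.
case/dvdnP: Hk => t Ht.
have -> : x = k * n + t * m by lia.
apply: (@zn_addm m n D (k * n) t zD); rewrite -(add0n (k * n)); apply: (@zn_addn m n D 0 k zD).
by case: zD.
Qed.

Lemma gen_lt m n D a : 0 < m -> 0 < n -> coprime m n -> zn_semimodule m n D ->
  is_gen n D a -> a < m * n.
Proof.
move=> m0 n0 co zD; rewrite /is_gen; case/andP=> _.
apply: contraNT; rewrite -leqNgt => ha.
have -> : n <= a by apply: leq_trans ha; apply: leq_pmull.
by rewrite (@big_in m n D m0 n0 co zD) //; lia.
Qed.

Lemma mem_gens m n p D x : (x \in gens m n p D) = (x < m * n) && is_gen p D x.
Proof. by rewrite /gens mem_filter mem_iota add0n andbC. Qed.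

Lemma gens_uniq m n p D : uniq (gens m n p D).
Proof. by rewrite filter_uniq // iota_uniq. Qed.

Lemma gens_sorted m n p D : sorted ltn (gens m n p D).
Proof. by apply: sorted_filter; [exact: ltn_trans| exact: iota_ltn_sorted]. Qed.

Lemma gap_step D n a :
  gap_count D n a + ~~ D (a + n) = ~~ D a + gap_count D n a.+1.
Proof.
rewrite /gap_count.
have h1 : count (fun y => ~~ D y) (iota a n.+1) = count (fun y => ~~ D y) (iota a n) + ~~ D (a + n).
  by rewrite -addn1 iotaD count_cat /= addn0.
have h2 : count (fun y => ~~ D y) (iota a n.+1) = ~~ D a + count (fun y => ~~ D y) (iota a.+1 n).
  by [].
by rewrite -h1 h2.
Qed.

Lemma count_ge_step (s : seq nat) k : uniq s ->
  count (fun b => k <= b) s = (k \in s) + count (fun b => k.+1 <= b) s.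
Proof.
move=> us; rewrite -(count_uniq_mem k us).
have := count_predUI (pred1 k) (fun b => k.+1 <= b) s.
have -> : count (predI (pred1 k) (fun b => k.+1 <= b)) s = 0.
  by apply/eqP; rewrite -leqn0 leqNgt -has_count; apply/hasP => -[x _] /= /andP [/eqP -> ]; rewrite ltnn.
rewrite addn0 => <-; apply: eq_count => x /=; rewrite leq_eqVlt; lia.
Qed.

Lemma gap_id m n D a : 0 < m -> 0 < n -> coprime m n -> zn_semimodule m n D ->
  gap_count D n a = count (fun b => a + n <= b) (gens m n n D).
Proof.
move=> m0 n0 co zD.
have big := @big_in m n D m0 n0 co zD.
have mn : (m - 1) * n <= m * n by rewrite leq_mul2r leq_subr orbT.
suff H : forall k a, m * n <= a + k ->
  gap_count D n a = count (fun b => a + n <= b) (gens m n n D) by apply: (H (m * n)); lia.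
elim=> [|k IH] {}a hk.
  rewrite addn0 in hk.
  have -> : gap_count D n a = 0.
    rewrite /gap_count; apply/eqP; rewrite -leqn0 leqNgt -has_count; apply/hasP => -[y].
    by rewrite mem_iota => /andP [hy _]; rewrite big //; lia.
  apply/esym/eqP; rewrite -leqn0 leqNgt -has_count; apply/hasP => -[y].
  by rewrite mem_gens => /andP [hy _]; lia.
case: (leqP (m * n) (a + k)) => hak; first by apply: IH.
have IH1 := IH a.+1 ltac:(lia).
have st := gap_step D n a.
rewrite (@count_ge_step _ (a + n) (gens_uniq _ _ _ _)) -addSn -IH1 mem_gens.
have hg : (a + n < m * n) && is_gen n D (a + n) = D (a + n) && ~~ D a.
  rewrite /is_gen leq_addl /= addnK.
  case Dan : (D (a + n)) => //=; case Da : (D a) => //=; rewrite ?andbF ?andbT //.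
  have := (@gen_lt m n D (a + n) m0 n0 co zD); rewrite /is_gen Dan leq_addl addnK Da => /(_ isT). lia.
rewrite hg.
case zD => [Hs _].
case Da : (D a) st => /=.
  by rewrite (Hs _ Da).2 /=; lia.
case: (D (a + n)) => /=; lia.
Qed.

Lemma size_gens m n D : 0 < m -> 0 < n -> coprime m n -> zn_semimodule m n D ->
  size (gens m n n D) = n.
Proof.
move=> m0 n0 co zD.
rewrite -(count_predC (fun b => n <= b)).
have -> : count (fun b => n <= b) (gens m n n D) = gap_count D n 0.
  by rewrite (@gap_id m n D 0 m0 n0 co zD).
have -> : count (predC (fun b => n <= b)) (gens m n n D) = count D (iota 0 n).
  rewrite /gens count_filter.
  have -> : m * n = n + (m * n - n) by rewrite subnKC // leq_pmull.
  rewrite iotaD count_cat.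
  have -> : count (predI (predC (fun b => n <= b)) (is_gen n D)) (iota (0 + n) (m * n - n)) = 0.
    apply/eqP; rewrite -leqn0 leqNgt -has_count; apply/hasP => -[y].
    by rewrite mem_iota /= => /andP [hy _] /andP [] /=; rewrite add0n in hy; rewrite hy.
  rewrite addn0; apply: eq_in_count => y; rewrite mem_iota /= => hy; have {}hy : y < n by lia.
  by rewrite /is_gen -ltnNge hy /= (leqNgt n y) hy /= andbT.
by rewrite /gap_count addnC count_predC size_iota.
Qed.

Lemma sorted_count_nth (T : Type) (r : rel T) (P : pred T) (x0 : T) s i :
  transitive r -> (forall x y, r x y -> P y -> P x) -> sorted r s -> i < size s ->
  (i < count P s) = P (nth x0 s i).
Proof.
move=> tr hP; elim: s i => [|x s IH] i //= ss hi.
have ss' : sorted r s by apply: path_sorted ss.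
have allx : all (r x) s := order_path_min tr ss.
case Px : (P x) => /=.
  case: i hi => [|i] hi //=.
  by rewrite ltnS IH.
have allC : all (predC P) s.
  by apply: sub_all allx => y /= /hP H; apply/negP => /H; rewrite Px.
have -> : count P s = 0.
  move: allC; rewrite all_count => /eqP hc; have := count_predC P s; lia.
case: i hi => [|i] hi //=.
apply/esym/negbTE; apply/negP => Py.
by move: (all_nthP x0 allx i hi) => /hP /(_ Py); rewrite Px.
Qed.
Set Implicit Arguments.
Unset Strict Implicit.

Definition good (c : nat) (D : nat -> bool) :=
  (forall y, c <= y -> D y) /\ (0 < c -> ~~ D (c - 1)).
Definition dual (c : nat) (D : nat -> bool) : nat -> bool :=
  fun x => (c <= x) || ~~ D (c - 1 - x).

Lemma exists_good m n D : 0 < m -> 0 < n -> coprime m n -> zn_semimodule m n D ->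
  exists c, good c D.
Proof.
move=> m0 n0 co zD.
have big := @big_in m n D m0 n0 co zD.
suff H : forall N, (forall y, N <= y -> D y) -> exists c, good c D by exact: H big.
elim=> [|N IH] hN; first by exists 0; split.
case DN : (D N).
  apply: IH => y; rewrite leq_eqVlt; case/orP => [/eqP <- //|]; exact: hN.
by exists N.+1; split => // _; rewrite subn1 /= DN.
Qed.

Lemma dual_zn m n c D : good c D -> zn_semimodule m n D -> zn_semimodule m n (dual c D).
Proof.
move=> [g1 g2] [Hs D0]; split.
  move=> x; rewrite /dual; case/orP => [hx|hx].
    by split; apply/orP; left; lia.
  split; apply/orP.
    case: (leqP c (x + m)) => h; [by left| right].
    apply/negP => Dy; move: (Hs _ Dy).1; have -> : c - 1 - (x + m) + m = c - 1 - x by lia.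
    by apply/negP.
  case: (leqP c (x + n)) => h; [by left| right].
  apply/negP => Dy; move: (Hs _ Dy).2; have -> : c - 1 - (x + n) + n = c - 1 - x by lia.
  by apply/negP.
rewrite /dual; case: (posnP c) => [->//|c0]; apply/orP; right.
by have := g2 c0; rewrite subn0.
Qed.

Lemma good_dual c (D : nat -> bool) : D 0 -> good c D -> good c (dual c D).
Proof.
move=> D0 [g1 g2]; split; first by move=> y hy; rewrite /dual hy.
move=> c0; rewrite /dual; have -> : c <= c - 1 = false by lia.
have -> : c - 1 - (c - 1) = 0 by lia.
by rewrite D0.
Qed.

Lemma dual_dual c D : good c D -> dual c (dual c D) =1 D.
Proof.
move=> [g1 g2] x; rewrite /dual.
case: (leqP c x) => hx; first by rewrite (g1 x hx).
have -> : c <= c - 1 - x = false by lia.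
have -> : c - 1 - (c - 1 - x) = x by lia.
by rewrite negbK.
Qed.

Lemma gen_lt_c p c D a : good c D -> is_gen p D a -> a < c + p.
Proof.
move=> [g1 _]; rewrite /is_gen => /andP [_].
case: (leqP p a) => /= hp; last by lia.
move=> hD; case: (leqP c (a - p)) => h; last by lia.
by rewrite g1 in hD.
Qed.

Lemma dual_gen p c D x : good c D ->
  is_gen p (dual c D) x = (x < c + p) && is_gen p D (c + p - 1 - x).
Proof.
move=> [g1 g2]; rewrite /is_gen /dual.
case: (leqP (c + p) x) => hx /=.
  have -> : c <= x by lia. have -> : p <= x by lia. have -> : c <= x - p by lia.
  by [].
case: (leqP c x) => hcx /=.
  case: (leqP p x) => hpx /=.
    have -> : c <= x - p = false by lia.
    have -> : c - 1 - (x - p) = c + p - 1 - x by lia.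
    have -> : p <= c + p - 1 - x = false by lia.
    by rewrite negbK andbT.
  have -> : p <= c + p - 1 - x = false by lia.
  by rewrite /= andbT (g1 (c + p - 1 - x)) //; lia.
have -> : c - 1 - x = c + p - 1 - x - p by lia.
have -> : p <= c + p - 1 - x by lia.
case: (leqP p x) => hpx /=.
  have -> : c <= x - p = false by lia.
  have -> : c - 1 - (x - p) = c + p - 1 - x by lia.
  by rewrite negbK andbC.
by rewrite (g1 (c + p - 1 - x)) //; lia.
Qed.

Lemma gens_swap m n p D : gens m n p D = gens n m p D.
Proof. by rewrite /gens mulnC. Qed.

Lemma gens_dual_perm m n c D : 0 < m -> 0 < n -> coprime m n ->
  zn_semimodule m n D -> good c D ->
  perm_eq (gens m n n (dual c D)) (map (fun a => c + n - 1 - a) (gens m n n D)).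
Proof.
move=> m0 n0 co zD gD.
have zD' := dual_zn gD zD.
apply: uniq_perm; first exact: gens_uniq.
  rewrite map_inj_in_uniq; first exact: gens_uniq.
  move=> a a'; rewrite !mem_gens => /andP [_ ga] /andP [_ ga'].
  have := gen_lt_c gD ga; have := gen_lt_c gD ga'; lia.
move=> x; rewrite mem_gens dual_gen //.
apply/idP/mapP.
  case/andP=> _ /andP [hx ga]; exists (c + n - 1 - x); last by lia.
  by rewrite mem_gens ga andbT (@gen_lt m n D _ m0 n0 co zD ga).
case=> a; rewrite mem_gens => /andP [_ ga] ->.
have ha := gen_lt_c gD ga.
have hg : is_gen n (dual c D) (c + n - 1 - a).
  rewrite dual_gen //; have -> : c + n - 1 - (c + n - 1 - a) = a by lia.
  by rewrite ga andbT; lia.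
rewrite (@gen_lt m n _ _ m0 n0 co zD' hg) /=.
by move: hg; rewrite dual_gen.
Qed.

Lemma gens_ext m n p D D' : D =1 D' -> gens m n p D = gens m n p D'.
Proof. by move=> e; apply: eq_filter => x; rewrite /is_gen !e. Qed.

Lemma gap_ext D D' l x : D =1 D' -> gap_count D l x = gap_count D' l x.
Proof. by move=> e; apply: eq_count => y; rewrite e. Qed.

Lemma G_m_ext m n D D' : D =1 D' -> G_m m n D = G_m m n D'.
Proof.
move=> e; rewrite /G_m (gens_ext _ _ _ e); apply: eq_map => a; exact: gap_ext.
Qed.

Lemma G_n_ext m n D D' : D =1 D' -> G_n m n D = G_n m n D'.
Proof.
move=> e; rewrite /G_n (gens_ext _ _ _ e); apply: eq_map => a; exact: gap_ext.
Qed.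

Definition conj (k : nat) (h : seq nat) : seq nat :=
  [seq count (fun x => j < x) h | j <- iota 0 k].

Lemma I1 m n c D : 0 < m -> 0 < n -> coprime m n ->
  zn_semimodule m n D -> good c D ->
  G_n m n D = conj n (G_m m n (dual c D)).
Proof.
move=> m0 n0 co zD gD.
have zD' := dual_zn gD zD.
have co' : coprime n m by rewrite coprime_sym.
have zDs := @zn_sym m n D zD.
have zDs' := @zn_sym m n _ zD'.
have gapm : forall b, gap_count D m b = count (fun a => b + m <= a) (gens m n m D).
  by move=> b; rewrite (@gap_id n m D b n0 m0 co' zDs) gens_swap.
have permm : perm_eq (gens m n m (dual c D)) (map (fun a => c + m - 1 - a) (gens m n m D)).
  by rewrite !(gens_swap m n); exact: (gens_dual_perm n0 m0 co' zDs gD).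
have permn := gens_dual_perm m0 n0 co zD gD.
apply: (@eq_from_nth _ 0).
  by rewrite /G_n /conj !size_map size_iota (@size_gens m n D m0 n0 co zD).
rewrite /G_n size_map (@size_gens m n D m0 n0 co zD) => j hj.
rewrite (nth_map 0); last by rewrite (@size_gens m n D m0 n0 co zD).
rewrite /conj (nth_map 0); last by rewrite size_iota.
rewrite nth_iota // add0n gapm /G_m count_map (permP permm) count_map.
apply: eq_in_count => a; rewrite mem_gens => /andP [_ ga] /=.
have ha := gen_lt_c gD ga.
rewrite (@gap_id m n (dual c D) _ m0 n0 co zD') (permP permn) count_map.
have -> : count (preim (fun a0 => c + n - 1 - a0) (fun b => c + m - 1 - a + n <= b)) (gens m n n D)
        = count (fun b => b + m <= a) (gens m n n D).
  apply: eq_in_count => b; rewrite mem_gens => /andP [_ gb] /=.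
  have := gen_lt_c gD gb; lia.
rewrite (@sorted_count_nth _ ltn (fun b => b + m <= a) 0) //.
- exact: ltn_trans.
- by move=> x y /= hxy hy; lia.
- exact: gens_sorted.
by rewrite (@size_gens m n D m0 n0 co zD).
Qed.

Lemma key_geq (h : seq nat) i j : sorted geq h -> i < size h ->
  (i < count (fun x => j < x) h) = (j < nth 0 h i).
Proof.
move=> sh hi; apply: (@sorted_count_nth _ geq) => //.
- by move=> x y z /= h1 h2; lia.
- by move=> x y /= h1 h2; lia.
Qed.

Lemma count_lt_iota t q : count (fun j => j < t) (iota 0 q) = minn t q.
Proof.
elim: q => [|q IH]; first by rewrite minn0.
by rewrite -addn1 iotaD count_cat IH /= add0n; case: (ltnP q t) => h; lia.
Qed.

Lemma Y_bound p q h i : in_Y p q h -> i < p -> nth 0 h i <= q.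
Proof.
case=> sz sh box ip.
case: (posnP (nth 0 h i)) => [->//|h0].
have := box (Ordinal ip) (nth 0 h i) ltac:(by rewrite h0 leqnn).
move=> H.
have : nth 0 h i * p <= q * p by lia.
by rewrite leq_pmul2r //; lia.
Qed.

Lemma Y2 p q h : in_Y p q h -> conj p (conj q h) = h.
Proof.
move=> hY; have [sz sh box] := hY.
apply: (@eq_from_nth _ 0); first by rewrite size_map size_iota.
rewrite size_map size_iota => i ip.
rewrite (nth_map 0); last by rewrite size_iota.
rewrite nth_iota // add0n /conj count_map.
have -> : count (preim (fun j => count (fun x => j < x) h) (fun x => i < x)) (iota 0 q)
        = count (fun j => j < nth 0 h i) (iota 0 q).
  by apply: eq_count => j /=; rewrite key_geq // sz.
rewrite count_lt_iota; have := Y_bound hY ip; lia.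
Qed.

Lemma Y1 p q h : in_Y p q h -> in_Y q p (conj q h).
Proof.
move=> hY; have [sz sh box] := hY.
split; first by rewrite size_map size_iota.
  apply: (@homo_sorted _ _ _ ltn); last exact: iota_ltn_sorted.
  move=> x y /= hxy; apply: sub_count => z /=; lia.
move=> i j /andP [j1 hj].
have iq := ltn_ord i.
rewrite (nth_map 0) ?size_iota // nth_iota // add0n in hj.
have hc : j.-1 < count (fun x => i < x) h by lia.
have jp : j.-1 < p.
  have := count_size (fun x => i < x) h; rewrite sz; lia.
rewrite key_geq // ?sz // in hc.
have := box (Ordinal jp) i.+1 ltac:(apply/andP; split; [by [] | exact: hc]).
rewrite /= (_ : j.-1.+1 = j); last by lia.
by rewrite mulnC; lia.
Qed.

Lemma dual_ext c E E' : E =1 E' -> dual c E =1 dual c E'.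
Proof. by move=> e x; rewrite /dual e. Qed.

Lemma good_ext c E E' : E =1 E' -> good c E -> good c E'.
Proof. by move=> e [g1 g2]; split => [y hy|hc]; rewrite -e; auto. Qed.

Lemma good_unique c c' E : good c E -> good c' E -> c = c'.
Proof.
move=> [g1 g2] [g1' g2'].
case: (ltngtP c c') => // h.
  by have := g2' ltac:(lia); rewrite g1 //; lia.
by have := g2 ltac:(lia); rewrite g1' //; lia.
Qed.

Lemma transfer m n (G1 G2 : (nat -> bool) -> seq nat) (Y1 Y2 : seq nat -> Prop) T T' :
  (forall D c, zn_semimodule m n D -> good c D -> G1 D = T (G2 (dual c D))) ->
  (forall D, zn_semimodule m n D -> exists c, good c D) ->
  (forall D D', D =1 D' -> G2 D = G2 D') ->
  (forall y, Y2 y -> Y1 (T y)) -> (forall h, Y1 h -> Y2 (T' h)) ->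
  (forall y, Y2 y -> T' (T y) = y) -> (forall h, Y1 h -> T (T' h) = h) ->
  bij_onto m n G2 Y2 -> bij_onto m n G1 Y1.
Proof.
move=> HA Hex Hext TY T'Y T'T TT' [land inj surj].
split.
- move=> D zD; have [c gc] := Hex D zD.
  by rewrite (HA D c zD gc); apply: TY; apply: land; exact: dual_zn.
- move=> D1 D2 z1 z2 e.
  have [c1 g1] := Hex D1 z1; have [c2 g2] := Hex D2 z2.
  rewrite (HA D1 c1 z1 g1) (HA D2 c2 z2 g2) in e.
  have e' := f_equal T' e.
  rewrite !T'T in e'; try (apply: land; exact: dual_zn).
  have ed := inj _ _ (dual_zn g1 z1) (dual_zn g2 z2) e'.
  have D10 : D1 0 by case: z1.
  have D20 : D2 0 by case: z2.
  have gg : good c1 (dual c2 D2) := good_ext ed (good_dual D10 g1).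
  have ec := good_unique gg (good_dual D20 g2); subst c2.
  move=> x; rewrite -(dual_dual g1 x) -(dual_dual g2 x).
  exact: dual_ext ed x.
- move=> h Yh.
  have [D [zD eD]] := surj _ (T'Y h Yh).
  have [c gc] := Hex D zD.
  have D0 : D 0 by case: zD.
  exists (dual c D); split; first exact: dual_zn.
  rewrite (HA _ c (dual_zn gc zD) (good_dual D0 gc)).
  by rewrite (Hext _ _ (dual_dual gc)) eD TT'.
Qed.

Theorem mainTheorem7 (m n : nat) :
  0 < m -> 0 < n -> coprime m n ->
  (bij_onto m n (G_n m n) (in_Y n m) <-> bij_onto m n (G_m m n) (in_Y m n)).
Proof.
move=> m0 n0 co.
have co' : coprime n m by rewrite coprime_sym.
have Hex : forall D, zn_semimodule m n D -> exists c, good c D.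
  by move=> D zD; exact: (@exists_good m n D m0 n0 co zD).
split.
- apply: (@transfer m n (G_m m n) (G_n m n) (in_Y m n) (in_Y n m) (conj m) (conj n)) => //.
  + move=> D c zD gc.
    have zDs := @zn_sym m n D zD.
    have -> : G_m m n D = G_n n m D by rewrite /G_m /G_n gens_swap.
    have -> : G_n m n (dual c D) = G_m n m (dual c D) by rewrite /G_m /G_n gens_swap.
    exact: (I1 n0 m0 co' zDs gc).
  + exact: G_n_ext.
  + by move=> y; apply: Y1.
  + by move=> y; apply: Y1.
  + by move=> y; apply: Y2.
  + by move=> y; apply: Y2.
- apply: (@transfer m n (G_n m n) (G_m m n) (in_Y n m) (in_Y m n) (conj n) (conj m)) => //.
  + move=> D c zD gc; exact: (I1 m0 n0 co zD gc).
  + exact: G_m_ext.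
  + by move=> y; apply: Y1.
  + by move=> y; apply: Y1.
  + by move=> y; apply: Y2.
  + by move=> y; apply: Y2.
Qed.
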